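(* Let $p\ge1$, $u\in E^p$ and $\alpha,\beta\in\mathbb{R}$. Then $$D(\alpha u,\beta u)\le |\alpha-\beta|\,\max\{\|y\|: y\in[u]_0\}.$$
   Context: A fuzzy subset of $\mathbb{R}^p$ is a function $u:\mathbb{R}^p\to[0,1]$. Its $\alpha$-cut is $[u]_\alpha=\{x\in\mathbb{R}^p: u(x)\ge\alpha\}$ for $\alpha\in(0,1]$, and $[u]_0=\overline{\{x\in\mathbb{R}^p: u(x)>0\}}$. The set $E^p$ of $p$-dimensional fuzzy numbers consists of all fuzzy subsets $u$ of $\mathbb{R}^p$ such that $[u]_\alpha$ is a nonempty compact convex subset of $\mathbb{R}^p$ for every $\alpha\in[0,1]$. For $u\in E^p$ and $r\in\mathbb{R}$, $r u$ is the element of $E^p$ determined by $[r u]_\gamma=\{rx: x\in[u]_\gamma\}$ for all $\gamma\in[0,1]$. The sendograph of $u\in E^p$ is $\mathrm{send}\,u=\{(x,\gamma)\in[u]_0\times[0,1]: u(x)\ge\gamma\}\subset\mathbb{R}^{p+1}$. For nonempty compact $U,V\subset\mathbb{R}^{p+1}$ (with the Euclidean metric $d$), the Hausdorff metric is $H(U,V)=\max\{H^*(U,V),H^*(V,U)\}$ with $H^*(U,V)=\sup_{a\in U}\inf_{b\in V}d(a,b)$. The sendograph metric on $E^p$ is $D(u,v)=H(\mathrm{send}\,u,\mathrm{send}\,v)$. $\|\cdot\|$ is the Euclidean norm on $\mathbb{R}^p$. *)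

(* Defs.v *)
From HB Require Import structures.
From mathcomp Require Import all_boot all_order all_algebra.
From mathcomp Require Import all_classical all_reals all_analysis.
Set Implicit Arguments. Unset Strict Implicit. Unset Printing Implicit Defensive.
Import Order.TTheory GRing.Theory Num.Theory.
Import numFieldTopology.Exports numFieldNormedType.Exports.
Local Open Scope classical_set_scope.
Local Open Scope ring_scope.

Section FuzzyDefs.
Variables (R : realType) (p : nat).
Notation vec := 'rV[R]_p.

Definition enorm (x : vec) : R := Num.sqrt (\sum_(i < p) (x ord0 i) ^+ 2).

Definition acut (u : vec -> R) (a : R) : set vec :=
  if 0 < a then [set x | a <= u x] else closure [set x | 0 < u x].

Definition convex_set (A : set vec) : Prop :=
  forall x y t, A x -> A y -> 0 <= t <= 1 -> A (t *: x + (1 - t) *: y).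

Definition fuzzy_number (u : vec -> R) : Prop :=
  (forall x, 0 <= u x <= 1) /\
  (forall a, 0 <= a <= 1 ->
     acut u a !=set0 /\ compact (acut u a) /\ convex_set (acut u a)).

(* r u : the fuzzy number with [r u]_g = r [u]_g for all g *)
Definition fscale (r : R) (u : vec -> R) : vec -> R :=
  fun x => if r != 0 then u (r^-1 *: x) else (if x == 0 then 1 else 0).

(* R^{p+1} rendered as R^p * R, with the Euclidean metric *)
Definition dist (a b : vec * R) : R :=
  Num.sqrt (enorm (a.1 - b.1) ^+ 2 + (a.2 - b.2) ^+ 2).

Definition send (u : vec -> R) : set (vec * R) :=
  [set xg | acut u 0 xg.1 /\ 0 <= xg.2 <= 1 /\ xg.2 <= u xg.1].

Definition hausdorff_star (U V : set (vec * R)) : R :=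
  sup [set inf [set dist a b | b in V] | a in U].

Definition hausdorff (U V : set (vec * R)) : R :=
  Num.max (hausdorff_star U V) (hausdorff_star V U).

Definition send_metric (u v : vec -> R) : R := hausdorff (send u) (send v).

End FuzzyDefs.

(* Main.v *)
Require Import Defs.
From HB Require Import structures.
From mathcomp Require Import all_boot all_order all_algebra.
From mathcomp Require Import all_classical all_reals all_analysis.
Import Order.TTheory GRing.Theory Num.Theory.
Import numFieldTopology.Exports numFieldNormedType.Exports.
Local Open Scope classical_set_scope.
Local Open Scope ring_scope.

Section H.
Variables (R : realType) (p : nat).
Notation vec := 'rV[R]_p.

Lemma closure_pre (f : vec -> vec) (A E : set vec) :
  continuous f -> A `<=` f @^-1` E -> closure A `<=` f @^-1` closure E.
Proof.
move=> fc AE.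
have cl : closed (f @^-1` closure E).
  by apply: preimage_closed; [move=> x _; exact: fc | exact: closed_closure].
rewrite ((closure_id _).1 cl); apply: closureS => x /AE Ex /=.
exact: (@subset_closure _ E (f x) Ex).
Qed.

Lemma closure0vec (A : set vec) : A `<=` [set 0] -> closure A `<=` [set 0].
Proof.
move=> A0.
have cl : closed [set (0 : vec)].
  exact/accessible_closed_set1/hausdorff_accessible/norm_hausdorff.
rewrite ((closure_id _).1 cl); exact: closureS.
Qed.

Variable u : vec -> R.
Hypothesis hu : fuzzy_number u.

Lemma acut0E : acut u 0 = closure [set x | 0 < u x].
Proof. by rewrite /acut ltxx. Qed.

Lemma decomp a x g : send (fscale a u) (x, g) ->
  exists y, acut u 0 y /\ x = a *: y /\ g <= u y /\ 0 <= g <= 1.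
Proof.
rewrite /send /= /acut ltxx => -[cx [g01 gle]].
have [a0|a0] := eqVneq a 0.
  have x0 : x = 0.
    have H : [set z | 0 < fscale a u z] `<=` [set 0].
      move=> z /=; rewrite /fscale a0 eqxx /=.
      by case: eqP => // _; rewrite ltxx.
    exact: (closure0vec _ H _ cx).
  have [_ hcut] := hu.
  have [[y y1] _] := hcut 1 ltac:(by rewrite ler01 lexx).
  move: y1; rewrite /acut ltr01 /= => y1.
  exists y; split; first by apply: (@subset_closure _ [set x | 0 < u x] y); rewrite /= (lt_le_trans ltr01 y1).
  split; first by rewrite x0 a0 scale0r.
  by split => //; apply: le_trans y1; case/andP: g01.
exists (a^-1 *: x); split; last first.
  split; first by rewrite scalerA divff // scale1r.
  by split => //; move: gle; rewrite /fscale a0.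
have H : [set z | 0 < fscale a u z] `<=` (fun z => a^-1 *: z) @^-1` [set z | 0 < u z].
  by move=> z /=; rewrite /fscale a0.
have sc : continuous (fun z : vec => a^-1 *: z) by exact: scaler_continuous.
exact: (closure_pre _ _ _ sc H _ cx).
Qed.

Lemma lift b y g : acut u 0 y -> 0 <= g <= 1 -> g <= u y ->
  send (fscale b u) (b *: y, g).
Proof.
rewrite /acut ltxx => cy g01 gy; rewrite /send /acut ltxx /=.
have [b0|b0] := eqVneq b 0.
  rewrite b0 scale0r /fscale eqxx /= eqxx; split; last by split => //; case/andP: g01.
  set A := [set x | _].
  by apply: (@subset_closure _ A); rewrite /A /= eqxx ltr01.
rewrite /fscale b0 scalerA mulVf // scale1r; split => //.
have H : [set z | 0 < u z] `<=` (fun z => b *: z) @^-1` [set z | 0 < u (b^-1 *: z)].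
  by move=> z /=; rewrite scalerA mulVf // scale1r.
have sc : continuous (fun z : vec => b *: z) by exact: scaler_continuous.
exact: (closure_pre _ _ _ sc H _ cy).
Qed.

Lemma enormZ k (y : vec) : enorm (k *: y) = `|k| * enorm y.
Proof.
rewrite /enorm.
under eq_bigr => i _ do rewrite mxE exprMn.
by rewrite -mulr_sumr sqrtrM ?sqr_ge0 // sqrtr_sqr.
Qed.

Lemma enorm_ge0 (y : vec) : 0 <= enorm y.
Proof. exact: sqrtr_ge0. Qed.

Lemma dist_scale (a b : R) (y : vec) (g : R) : dist (a *: y, g) (b *: y, g) = `|a - b| * enorm y.
Proof.
rewrite /dist /= subrr.
have -> : (0:R) ^+ 2 = 0 by rewrite expr2 mulr0.
rewrite addr0 -scalerBl enormZ sqrtr_sqr.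
by rewrite normrM normr_id ger0_norm // enorm_ge0.
Qed.

Lemma entry_le (y : vec) i : `|y ord0 i| <= `|y|.
Proof.
rewrite [X in _ <= X]mx_normrE.
exact: (le_bigmax _ _ (ord0, i)).
Qed.

Lemma bound0 : exists C, forall y, acut u 0 y -> enorm y <= C.
Proof.
have [_ hcut] := hu.
have [_ [cpt _]] := hcut 0 ltac:(by rewrite lexx ler01).
have := compact_bounded cpt.
case=> M [Mr HM].
have HK := HM (M + 1) ltac:(by rewrite ltrDl ltr01).
exists (Num.sqrt (\sum_(i < p) (M + 1) ^+ 2)) => y Ay.
rewrite /enorm ler_sqrt; last by apply: sumr_ge0 => i _; exact: sqr_ge0.
apply: ler_sum => i _.
have yK : `|y| <= M + 1 by exact: HK.
have yi := entry_le y i.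
rewrite -real_normK ?num_real //.
apply: lerXn2r; rewrite ?nnegrE ?normr_ge0 //.
  by apply: le_trans yK; apply: le_trans yi.
exact: le_trans yi yK.
Qed.

Let S := [set enorm y | y in acut u 0].

Lemma hasubS : has_ubound S.
Proof.
have [C HC] := bound0; exists C => z [y Ay <-]; exact: HC.
Qed.

Lemma le_supS y : acut u 0 y -> enorm y <= sup S.
Proof. by move=> Ay; apply: (ub_le_sup hasubS); exists y. Qed.

Lemma supS_ge0 : 0 <= sup S.
Proof.
have [_ hcut] := hu.
have [[y Ay] _] := hcut 0 ltac:(by rewrite lexx ler01).
exact: le_trans (enorm_ge0 y) (le_supS y Ay).
Qed.

Lemma star a b :
  hausdorff_star (send (fscale a u)) (send (fscale b u)) <= `|a - b| * sup S.
Proof.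
rewrite /hausdorff_star.
set T := [set _ | _ in _].
have ub : ubound T (`|a - b| * sup S).
  move=> z [[x g] Ua <-].
  have [y [Ay [-> [gy g01]]]] := decomp a x g Ua.
  have Vb := lift b y g Ay g01 gy.
  have lb : has_lbound [set dist (a *: y, g) b0 | b0 in send (fscale b u)].
    by exists 0 => w [b0 _ <-]; exact: sqrtr_ge0.
  have h1 : inf [set dist (a *: y, g) b0 | b0 in send (fscale b u)] <= dist (a *: y, g) (b *: y, g).
    by apply: ge_inf lb _ _; exists (b *: y, g).
  apply: le_trans h1 _.
  rewrite dist_scale; apply: ler_wpM2l; first exact: normr_ge0.
  exact: le_supS.
have [ne|e] := pselect (T !=set0); first exact: ge_sup.
have -> : T = set0 by apply/seteqP; split => // z Tz; apply: e; exists z.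
by rewrite sup0; apply: mulr_ge0; [exact: normr_ge0 | exact: supS_ge0].
Qed.
End H.

Theorem theorem2p3 (R : realType) (p : nat) (hp : (0 < p)%N)
  (u : 'rV[R]_p -> R) (hu : fuzzy_number u) (alpha beta : R) :
  send_metric (fscale alpha u) (fscale beta u)
    <= `|alpha - beta| * sup [set enorm y | y in acut u 0].
Proof.
rewrite /send_metric /hausdorff ge_max.
rewrite (@star R p u hu alpha beta) /=.
by rewrite distrC (@star R p u hu beta alpha).
Qed.
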